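(* Let $\mathcal{F}$ be a monotone feature. Then $\sigma^{\mathcal{F}}=\varrho^{\mathcal{F}}$, i.e. $\sigma^{\mathcal{F}}_{(G,f)}(u,v)=\varrho^{\mathcal{F}}_{(G,f)}(u,v)$ for every weighted graph $(G,f)$ and every $(u,v)\in\Delta^+$.
   Context: Graphs are finite simple undirected graphs; a weighted graph is $(G,f)$ with $G=(V,E)$, $f:E\to\mathbb{R}$. For $u\in\mathbb{R}$, $G_u=(V_u,E_u)$ is the subgraph induced by the edge set $f^{-1}((-\infty,u])$, $G_{+\infty}=G$. Only subgraphs induced by edge sets are considered. $\Delta^+=\{(u,v)\in\mathbb{R}\times(\mathbb{R}\cup\{+\infty\}):u<v\}$. A feature $\mathcal{F}$ assigns to every graph $H=(V_H,E_H)$ a function $2^{V_H\cup E_H}\to\{true,false\}$. It is monotone if (i) for any graphs $G'=(V',E')\subset G''$ and any $X\subseteq V'\cup E'$, $\mathcal{F}(X)=true$ in $G''$ implies $\mathcal{F}(X)=true$ in $G'$; and (ii) in any graph, for $Y\subset X$, $\mathcal{F}(X)=true$ implies $\mathcal{F}(Y)=true$. $X\subseteq V\cup E$ is an $\mathcal{F}$-set at level $w$ if $X\subseteq V_w\cup E_w$ and $\mathcal{F}(X)=true$ in $G_w$. It is a steady $\mathcal{F}$-set at $(u,v)$ if it is an $\mathcal{F}$-set at every level $w\in[u,v]$, and a ranging $\mathcal{F}$-set at $(u,v)$ if it is an $\mathcal{F}$-set at some level $w\le u$ and at some level $w'\ge v$. $\sigma^{\mathcal{F}}_{(G,f)}(u,v)$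 (resp. $\varrho^{\mathcal{F}}_{(G,f)}(u,v)$) is the number of steady (resp. ranging) $\mathcal{F}$-sets at $(u,v)$. *)

(* Defs.v *)
From HB Require Import structures.
From mathcomp Require Import all_boot all_order all_algebra.
From mathcomp Require Import boolp reals.
Set Implicit Arguments. Unset Strict Implicit. Unset Printing Implicit Defensive.
Import Order.TTheory GRing.Theory Num.Theory.
Local Open Scope ring_scope.

Section Graphs.
Variable T : finType.

(* An element of V ∪ E: a vertex (inl) or an edge (inr, a 2-subset of T). *)
Definition elt := (T + {set T})%type.

Definition is_graph (V : {set T}) (E : {set {set T}}) : Prop :=
  forall e, e \in E -> (e \subset V) /\ #|e| = 2%N.

Definition elts (V : {set T}) (E : {set {set T}}) : {set elt} :=
  [set inl x | x in V] :|: [set inr e | e in E].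

Definition edge_verts (E : {set {set T}}) : {set T} := \bigcup_(e in E) e.

Definition feature := {set T} -> {set {set T}} -> {set elt} -> bool.

(* Monotone feature. (i) is stated for subgraphs G' of G'' induced by an edge
   set E' ⊆ E'' (only edge-induced subgraphs are considered). *)
Definition monotone (F : feature) : Prop :=
  (forall (V'' : {set T}) (E'' E' : {set {set T}}) (X : {set elt}),
      is_graph V'' E'' -> E' \subset E'' ->
      X \subset elts (edge_verts E') E' ->
      F V'' E'' X -> F (edge_verts E') E' X) /\
  (forall (V : {set T}) (E : {set {set T}}) (X Y : {set elt}),
      is_graph V E -> Y \subset X -> F V E X -> F V E Y).

Variable R : realType.

(* Levels: Some u = real u, None = +oo. *)
Definition level := option R.
Definition le_lvl (a b : level) : bool :=
  match a, b with
  | _, None => true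
  | None, Some _ => false
  | Some x, Some y => x <= y
  end.
Definition lt_lvl (a b : level) : bool :=
  match a, b with
  | Some _, None => true
  | None, _ => false
  | Some x, Some y => x < y
  end.

Variables (V : {set T}) (E : {set {set T}}) (f : {set T} -> R).

(* G_w = (V_w, E_w); G_{+oo} = G. *)
Definition lvl_E (w : level) : {set {set T}} :=
  match w with
  | Some u => [set e in E | f e <= u]
  | None => E
  end.
Definition lvl_V (w : level) : {set T} :=
  match w with
  | Some u => edge_verts (lvl_E w)
  | None => V
  end.

Definition Fset (F : feature) (X : {set elt}) (w : level) : bool :=
  (X \subset elts (lvl_V w) (lvl_E w)) && F (lvl_V w) (lvl_E w) X.

Definition steady (F : feature) (X : {set elt}) (u : R) (v : level) : Prop :=
  forall w : level, le_lvl (Some u) w -> le_lvl w v -> Fset F X w.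

Definition ranging (F : feature) (X : {set elt}) (u : R) (v : level) : Prop :=
  (exists w : level, le_lvl w (Some u) /\ Fset F X w) /\
  (exists w' : level, le_lvl v w' /\ Fset F X w').

Definition sigmaF (F : feature) (u : R) (v : level) : nat :=
  #|[set X : {set elt} | `[< steady F X u v >]]|.
Definition rhoF (F : feature) (u : R) (v : level) : nat :=
  #|[set X : {set elt} | `[< ranging F X u v >]]|.

End Graphs.

(* Main.v *)
Require Import Defs.
From HB Require Import structures.
From mathcomp Require Import all_boot all_order all_algebra.
From mathcomp Require Import boolp reals.
Set Implicit Arguments. Unset Strict Implicit. Unset Printing Implicit Defensive.
Import Order.TTheory GRing.Theory Num.Theory.
Local Open Scope ring_scope.

Section Aux.
Variables (T : finType) (R : realType) (V : {set T}) (E : {set {set T}})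
  (f : {set T} -> R).
Hypothesis hG : is_graph V E.

Lemma le_lvl_trans (a b c : level R) : le_lvl a b -> le_lvl b c -> le_lvl a c.
Proof.
case: a => [a|]; case: b => [b|]; case: c => [c|] //=.
exact: le_trans.
Qed.

Lemma lvlE_sub (a : level R) : lvl_E E f a \subset E.
Proof. case: a => [a|] //=; apply/subsetP => e; rewrite inE; by case/andP. Qed.

Lemma lvlE_mono (a b : level R) : le_lvl a b -> lvl_E E f a \subset lvl_E E f b.
Proof.
case: a => [a|]; case: b => [b|] //= hab.
- apply/subsetP => e; rewrite !inE => /andP[-> h] /=; exact: le_trans h hab.
- exact: (lvlE_sub (Some a)).
Qed.

Lemma ev_mono (A B : {set {set T}}) : A \subset B -> edge_verts A \subset edge_verts B.
Proof.
move=> AB; apply/subsetP => x /bigcupP[e eA xe]; apply/bigcupP; exists e => //.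
exact: (subsetP AB).
Qed.

Lemma ev_V (A : {set {set T}}) : A \subset E -> edge_verts A \subset V.
Proof.
move=> AE; apply/subsetP => x /bigcupP[e eA xe].
have [h _] := hG (subsetP AE _ eA); exact: (subsetP h).
Qed.

Lemma lvlV_mono (a b : level R) : le_lvl a b -> lvl_V V E f a \subset lvl_V V E f b.
Proof.
case: a => [a|]; case: b => [b|] //= hab.
- by apply: ev_mono; apply: (lvlE_mono (a := Some a) (b := Some b)).
- by apply: ev_V; apply: (lvlE_sub (Some a)).
Qed.

Lemma elts_mono (V1 V2 : {set T}) (E1 E2 : {set {set T}}) :
  V1 \subset V2 -> E1 \subset E2 -> elts V1 E1 \subset elts V2 E2.
Proof.
move=> hV hE; apply/subsetP => x; rewrite !inE => /orP[/imsetP[y yV ->]|/imsetP[y yE ->]].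
- by apply/orP; left; apply/imsetP; exists y => //; exact: (subsetP hV).
- by apply/orP; right; apply/imsetP; exists y => //; exact: (subsetP hE).
Qed.

Lemma graph_lvl (w : level R) : is_graph (lvl_V V E f w) (lvl_E E f w).
Proof.
case: w => [w|] //= e he; split.
- by apply/subsetP => x xe; apply/bigcupP; exists e.
- have [_ h] := hG (subsetP (lvlE_sub (Some w)) _ he); exact: h.
Qed.

End Aux.

Theorem proposition3 (T : finType) (R : realType) (F : feature T)
  (hF : monotone F) (V : {set T}) (E : {set {set T}}) (hG : is_graph V E)
  (f : {set T} -> R) (u : R) (v : level R) (huv : lt_lvl (Some u) v) :
  sigmaF V E f F u v = rhoF V E f F u v.
Proof.
have luv : le_lvl (Some u) v.
  by case: v huv => [v|] //= /ltW.
rewrite /sigmaF /rhoF; apply: eq_card => X; rewrite !inE.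
apply/idP/idP => /asboolP H; apply/asboolP.
- split.
  + by exists (Some u); split; [rewrite /= lexx | apply: H; rewrite /= ?lexx].
  + have vv : le_lvl v v by case: v {H huv luv} => //= ?; exact: lexx.
    by exists v; split => //; apply: H.
- case: H => [[w [hw Fw]] [w' [hw' Fw']]] w'' h1 h2.
  have ww'' : le_lvl w w'' := le_lvl_trans hw h1.
  have w''w' : le_lvl w'' w' := le_lvl_trans h2 hw'.
  move: Fw Fw'; rewrite /Fset => /andP[Xw _] /andP[_ Fw'].
  have Xw'' : X \subset elts (lvl_V V E f w'') (lvl_E E f w'').
    apply: subset_trans Xw _; apply: elts_mono.
    - exact: lvlV_mono.
    - exact: lvlE_mono.
  rewrite Xw'' /=.
  case: w'' h1 h2 ww'' w''w' Xw'' => [w''|] h1 h2 ww'' w''w' Xw''.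
  + have [F1 _] := hF.
    apply: (F1 (lvl_V V E f w') (lvl_E E f w')) => //.
    * exact: graph_lvl.
    * exact: lvlE_mono w''w'.
  + by case: w' hw' Fw' w''w'.
Qed.
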